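(* Let $G=(V,E)$ and $G'=(V',E')$ be finite simple graphs. Then $\overline{X}_G=\overline{X}_{G'}$ if and only if the multisets $\{I_{G|_W}(t): W\subseteq V\}$ and $\{I_{G'|_{W'}}(t): W'\subseteq V'\}$ of independence polynomials of induced subgraphs (one entry per vertex subset, including the empty set) are equal.
   Context: $\overline{X}_G=\sum_\kappa\prod_{v\in V}\prod_{i\in\kappa(v)}x_i$, summed over proper set colorings $\kappa$ of $G$ (maps from $V$ to nonempty subsets of $\mathbb{Z}_{>0}$ with adjacent vertices receiving disjoint sets). For a graph $H$, its independence polynomial is $I_H(t)=\sum_{n\ge0}a_nt^n$ where $a_n$ is the number of independent sets of size $n$ in $H$. $G|_W$ is the induced subgraph on $W$. *)

(* Defs.v *)
From HB Require Import structures.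
From mathcomp Require Import all_boot all_order all_algebra.
Set Implicit Arguments. Unset Strict Implicit. Unset Printing Implicit Defensive.
Import GRing.Theory.
Local Open Scope ring_scope.

(* A finite simple graph is given by a finite vertex type V and an adjacency
   relation e : rel V that is symmetric and irreflexive. *)

(* Proper set colorings with colours in {1,...,n} (represented by 'I_n):
   every vertex gets a nonempty (finite) set of colours, adjacent vertices
   get disjoint sets. *)
Definition proper_set_coloring (V : finType) (e : rel V) (n : nat)
    (k : {ffun V -> {set 'I_n}}) : bool :=
  [forall v, k v != set0] && [forall u, forall v, e u v ==> [disjoint k u & k v]].

(* Coefficient of the monomial x_1^(a 0) ... x_n^(a (n-1)) in the set
   chromatic symmetric function \overline{X}_G: the number of proper set
   colorings in which colour i is used by exactly (a i) vertices (colourings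
   contributing to this monomial only use colours 1..n). *)
Definition setchrom_coef (V : finType) (e : rel V) (n : nat) (a : 'I_n -> nat)
    : nat :=
  #|[set k : {ffun V -> {set 'I_n}} | proper_set_coloring e k &&
        [forall i, #|[set v | i \in k v]| == a i]]|.

(* Equality of the set chromatic symmetric functions (as formal power series,
   i.e. coefficientwise over all monomials). *)
Definition setchrom_eq (V : finType) (e : rel V) (V' : finType) (e' : rel V')
    : Prop :=
  forall (n : nat) (a : 'I_n -> nat), setchrom_coef e a = setchrom_coef e' a.

Definition independent (V : finType) (e : rel V) (S : {set V}) : bool :=
  [forall u in S, forall v in S, ~~ e u v].

(* Independence polynomial of the induced subgraph G|_W: its independent sets
   are exactly the independent sets of G contained in W. *)
Definition indep_poly_induced (V : finType) (e : rel V) (W : {set V})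
    : {poly int} :=
  \sum_(S : {set V} | (S \subset W) && independent e S) 'X^#|S|.

(* The multiset {I_{G|_W}(t) : W subset V}, as a sequence (one entry per
   subset W, including the empty set), to be compared up to permutation. *)
Definition induced_indep_polys (V : finType) (e : rel V) : seq {poly int} :=
  [seq indep_poly_induced e W | W <- enum [set: {set V}]].

(* Main.v *)
Require Import Defs.
From mathcomp Require Import all_boot all_order all_algebra.
Set Implicit Arguments. Unset Strict Implicit. Unset Printing Implicit Defensive.
Import GRing.Theory Num.Theory.
Local Open Scope ring_scope.

From mathcomp Require Import ring.
From Stdlib Require Import Classical.

Lemma LI (L : seq (int * {poly int})) (q : {poly int}) :
  (forall s : seq nat, \sum_(x <- L) x.1 * \prod_(j <- s) x.2`_j = 0) ->
  \sum_(x <- L | x.2 == q) x.1 = 0.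
Proof.
move=> H.
have key : forall D : seq {poly int}, q \notin D ->
  exists phi : {poly int} -> int,
    [/\ (forall s, \sum_(x <- L) x.1 * phi x.2 * \prod_(j <- s) x.2`_j = 0),
        phi q != 0 & forall r, r \in D -> phi r = 0].
  elim => [|r D IH].
    move=> _; exists (fun _ => 1); split => // s.
    by under eq_bigr do rewrite mulr1; exact: H.
  rewrite inE negb_or => /andP [qr qD]; case: (IH qD) => phi [H1 H2 H3].
  have [k hk] : exists k, r`_k != q`_k.
    case: (classic (exists k, r`_k != q`_k)) => // N.
    case/negP: qr; apply/eqP/polyP => k; apply/eqP.
    by apply: contraT => nk; case: N; exists k; rewrite eq_sym.
  exists (fun p => phi p * (p`_k - r`_k)); split.
  - move=> s.
    rewrite (eq_bigr (fun x => x.1 * phi x.2 * \prod_(j <- k :: s) x.2`_j -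
                r`_k * (x.1 * phi x.2 * \prod_(j <- s) x.2`_j))).
      by rewrite sumrB -mulr_sumr !H1 mulr0 subrr.
    by move=> x _; rewrite big_cons; ring.
  - by rewrite mulf_neq0 // subr_eq0 eq_sym.
  - move=> r'; rewrite inE => /orP [/eqP ->|/H3 ->]; first by rewrite subrr mulr0.
    by rewrite mul0r.
have qD : q \notin [seq x.2 | x <- L & x.2 != q].
  by apply/negP => /mapP [x]; rewrite mem_filter => /andP [nq _] qx; rewrite -qx eqxx in nq.
case: (key _ qD) => phi [H1 H2 H3].
move: (H1 [::]); rewrite (bigID (fun x => x.2 == q)) /=.
rewrite [X in _ + X]big_seq_cond [X in _ + X]big1; last first.
  move=> x /andP [xL nq]; rewrite H3 ?mulr0 ?mul0r //.
  by apply/mapP; exists x => //; rewrite mem_filter nq.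
rewrite addr0 (eq_bigr (fun x => x.1 * phi q)); last first.
  by move=> x /eqP ->; rewrite big_nil mulr1.
by rewrite -mulr_suml => /eqP; rewrite mulf_eq0 (negbTE H2) orbF => /eqP.
Qed.

Lemma sumb (I : finType) (P : pred I) :
  \sum_(i | P i) (1 : int) = \sum_i (P i)%:R.
Proof. by rewrite big_mkcond; apply: eq_bigr => i _; case: (P i). Qed.

Section Helpers.
Variables (V : finType) (e : rel V).

Lemma coefP (W : {set V}) k : (indep_poly_induced e W)`_k =
  \sum_(S : {set V}) ((S \subset W) && independent e S && (#|S| == k))%:R.
Proof.
rewrite /indep_poly_induced coef_sum big_mkcond /=; apply: eq_bigr => S _.
by case: ifP => _; rewrite ?coefXn // eq_sym.
Qed.

Lemma coef1 (e_irr : irreflexive e) (W : {set V}) :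
  (indep_poly_induced e W)`_1 = #|W|%:R.
Proof.
rewrite coefP -sumb sumr_const; congr (_ *+ _).
rewrite -(card_imset W (@set1_inj V)); apply: eq_card => S; rewrite {1}unfold_in /=.
apply/idP/imsetP => [/andP [/andP [sW _] /cards1P [x Sx]]|[v vW ->]].
  by exists x => //; rewrite Sx sub1set in sW.
rewrite cards1 eqxx sub1set vW andbT /=.
by apply/forallP => u; apply/implyP; rewrite inE => /eqP->;
   apply/forallP => w; apply/implyP; rewrite inE => /eqP->; rewrite e_irr.
Qed.
Lemma alt (U : {set V}) :
  \sum_(W : {set V}) (-1)^+#|W| * (U \subset W)%:R = (-1)^+#|V| * (U == setT)%:R :> int.
Proof.
case: (eqVneq U setT) => [->|neU].
  rewrite (bigD1 setT) //= subxx big1 ?cardsT ?addr0 //.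
  by move=> W /negbTE; rewrite subTset => ->; rewrite mulr0.
have: ~~ ([set: V] \subset U) by rewrite subTset.
case/subsetPn => x _ xU.
pose tog (W : {set V}) := if x \in W then W :\ x else x |: W.
have togK : involutive tog.
  move=> W; rewrite /tog; case: (boolP (x \in W)) => xW.
    by rewrite setD11 setD1K.
  by rewrite setU11 setU1K.
set S := (X in X = _).
have: S = - S.
  rewrite {1}/S (reindex_inj (inv_inj togK)) /= /S -sumrN; apply: eq_bigr => W _.
  rewrite /tog; case: (boolP (x \in W)) => xW.
    by rewrite subsetD1 xU andbT (cardsD1 x W) xW exprS mulN1r mulNr opprK.
  have E : (U \subset x |: W) = (U \subset W).
    by rewrite -{2}(setU1K (xW)) subsetD1 xU andbT.
  rewrite E; by rewrite cardsU1 (negbTE xW) exprS mulN1r mulNr.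
move=> HS; rewrite mulr0.
have H2 : S *+ 2 == 0 by rewrite mulr2n {2}HS subrr.
by rewrite mulrn_eq0 /= in H2; apply/eqP.
Qed.
Lemma prodb (I : finType) (b : pred I) :
  \prod_i (b i)%:R = ([forall i, b i])%:R :> int.
Proof.
case: (boolP [forall i, b i]) => [/forallP H|/forallPn [i /negbTE bi]].
  by rewrite big1 // => i _; rewrite H.
by rewrite (bigD1 i) //= bi mul0r.
Qed.

Lemma count_col n (a : 'I_n -> nat) :
  \sum_(f : {ffun 'I_n -> {set V}})
     ([forall i, independent e (f i) && (#|f i| == a i)] &&
      (\bigcup_i f i == setT))%:R = (setchrom_coef e a)%:R :> int.
Proof.
pose T (f : {ffun 'I_n -> {set V}}) : {ffun V -> {set 'I_n}} :=
  [ffun v => [set i | v \in f i]].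
pose T' (k : {ffun V -> {set 'I_n}}) : {ffun 'I_n -> {set V}} :=
  [ffun i => [set v | i \in k v]].
have TK : cancel T T'.
  by move=> f; apply/ffunP => i; apply/setP => v; rewrite !ffunE !inE ffunE inE.
have T'K : cancel T' T.
  by move=> k; apply/ffunP => v; apply/setP => i; rewrite !ffunE !inE ffunE inE.
rewrite (reindex T'); last by apply: onW_bij; exists T.
rewrite /setchrom_coef -sumr_const -sumb; apply: eq_big => // k.
rewrite inE /proper_set_coloring.
have fE i : T' k i = [set v | i \in k v] by rewrite ffunE.
apply/idP/idP.
  case/andP => /forallP H1 /eqP H2.
  apply/andP; split; last by apply/forallP => i; case/andP: (H1 i); rewrite fE.
  apply/andP; split.
    apply/forallP => v; have: v \in \bigcup_i T' k i by rewrite H2 inE.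
    case/bigcupP => i _; rewrite fE inE => ikv; apply/set0Pn; by exists i.
  apply/forallP => u; apply/forallP => v; apply/implyP => euv.
  rewrite disjoints_subset; apply/subsetP => i iu; rewrite inE; apply/negP => iv.
  case/andP: (H1 i) => /forallP /(_ u) /implyP; rewrite fE inE => /(_ iu).
  by move/forallP/(_ v)/implyP; rewrite inE => /(_ iv); rewrite euv.
case/andP => /andP [/forallP H1 /forallP H2] /forallP H3.
apply/andP; split.
  apply/forallP => i; rewrite fE H3 andbT.
  apply/forallP => u; apply/implyP; rewrite inE => iu.
  apply/forallP => v; apply/implyP; rewrite inE => iv.
  apply/negP => euv; move: (H2 u) => /forallP /(_ v) /implyP /(_ euv).
  by move/disjointFr/(_ iu); rewrite iv.
apply/eqP/setP => v; rewrite inE; case/set0Pn: (H1 v) => i iv.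
by apply/bigcupP; exists i => //; rewrite fE inE.
Qed.
Lemma MF n (a : 'I_n -> nat) :
  (-1)^+#|V| * (setchrom_coef e a)%:R =
  \sum_(W : {set V}) (-1)^+#|W| * \prod_(i < n) (indep_poly_induced e W)`_(a i)
  :> int.
Proof.
pose Q (f : {ffun 'I_n -> {set V}}) :=
  [forall i, independent e (f i) && (#|f i| == a i)].
have step1 W : \prod_(i < n) (indep_poly_induced e W)`_(a i) =
  \sum_(f : {ffun 'I_n -> {set V}}) (\bigcup_i f i \subset W)%:R * (Q f)%:R.
  under eq_bigr => i _ do rewrite coefP.
  rewrite bigA_distr_bigA /=; apply: eq_bigr => f _.
  rewrite prodb -natrM mulnb; congr (_ *+ nat_of_bool _); apply/idP/idP.
    move/forallP => H; apply/andP; split.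
      by apply/bigcupsP => i _; case/andP: (H i) => /andP [].
    by apply/forallP => i; case/andP: (H i) => /andP [_ -> ->].
  case/andP => /bigcupsP H1 /forallP H2; apply/forallP => i.
  by rewrite H1 //=; apply: H2.
under eq_bigr => W _ do rewrite step1 mulr_sumr.
rewrite exchange_big /= -count_col mulr_sumr; symmetry; apply: eq_bigr => f _.
transitivity ((Q f)%:R * \sum_(W : {set V}) (-1)^+#|W| * (\bigcup_i f i \subset W)%:R :> int).
  by rewrite mulr_sumr; apply: eq_bigr => W _; ring.
rewrite (alt (\bigcup_i f i)).
by rewrite mulrCA -natrM mulnb.
Qed.
End Helpers.

Lemma MF2 (V : finType) (e : rel V) (e_irr : irreflexive e) n (a : 'I_n -> nat) :
  (-1)^+#|V| * (setchrom_coef e a)%:R =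
  \sum_(p <- induced_indep_polys e) (-1)^+`|p`_1| * \prod_(i < n) p`_(a i) :> int.
Proof.
rewrite MF /induced_indep_polys big_map big_enum /=.
apply: eq_big => [W|W _]; first by rewrite inE.
by rewrite coef1 // natz absz_nat.
Qed.

Lemma prod_seq (p : {poly int}) (s : seq nat) :
  \prod_(j <- s) p`_j = \prod_(i < size s) p`_(nth 0%N s i).
Proof. by rewrite (big_nth 0%N) big_mkord. Qed.

Lemma size_ind (V : finType) (e : rel V) :
  size (induced_indep_polys e) = (2 ^ #|V|)%N.
Proof.
by rewrite size_map -cardE -powersetT card_powerset cardsT.
Qed.

Lemma sum_const_eq (r : seq {poly int}) (q : {poly int}) (F : {poly int} -> int) :
  \sum_(p <- r | p == q) F p = F q *+ count_mem q r.
Proof.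
rewrite (eq_bigr (fun _ => F q)); last by move=> p /eqP ->.
by rewrite big_const_seq iter_addr_0.
Qed.

Theorem corollary1p6 (V : finType) (e : rel V)
    (e_sym : symmetric e) (e_irr : irreflexive e)
    (V' : finType) (e' : rel V')
    (e'_sym : symmetric e') (e'_irr : irreflexive e') :
  setchrom_eq e e' <->
  perm_eq (induced_indep_polys e) (induced_indep_polys e').
Proof.
have ME := @MF2 V e e_irr; have ME' := @MF2 V' e' e'_irr.
have SE := size_ind e; have SE' := size_ind e'.
move: ME ME' SE SE'.
set Le := induced_indep_polys e; set Le' := induced_indep_polys e'.
clearbody Le Le' => ME ME' SE SE'.
split => [H|Hp].
  pose sg : int := (-1) ^+ (#|V| + #|V'|).
  pose L := [seq ((-1)^+`|p`_1|, p) | p : {poly int} <- Le] ++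
            [seq (- (sg * (-1)^+`|p`_1|), p) | p : {poly int} <- Le'].
  have HL : forall s : seq nat, \sum_(x <- L) x.1 * \prod_(j <- s) x.2`_j = 0.
    move=> s; rewrite big_cat !big_map /=.
    under eq_bigr do rewrite prod_seq.
    under [X in _ + X]eq_bigr do rewrite prod_seq mulNr -mulrA.
    rewrite sumrN -mulr_sumr -ME -ME' H /sg exprD -mulrA.
    by rewrite (signrMK #|V'|) subrr.
  have Hq q : count_mem q Le = count_mem q Le'.
    move: (LI q HL); rewrite big_cat !big_map /=.
    rewrite (sum_const_eq Le q (fun p => (-1)^+`|p`_1|)).
    rewrite (sum_const_eq Le' q (fun p => - (sg * (-1)^+`|p`_1|))).
    move/eqP; rewrite addr_eq0 mulNrn opprK => /eqP /(congr1 (fun x => `|x|)).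
    rewrite !normrMn normrM !normr_sign mul1r.
    by move/eqP; rewrite eqr_nat => /eqP.
  by apply/allP => x _; apply/eqP; exact: Hq.
have NN : #|V| = #|V'|.
  by apply/eqP; rewrite -(@eqn_exp2l 2) // -SE -SE' (perm_size Hp).
move=> n a; apply/eqP; rewrite -(eqr_nat int) -(inj_eq (inv_inj (signrMK (R:=int) #|V|))) /=.
by rewrite ME NN ME' (perm_big _ Hp).
Qed.
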